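(* Let $P$ be a finite poset. Then $S_N(S_N(P))$ is $N$-free. Moreover, $S_N(S_N(P))$ is the smallest $N$-free poset obtained as a barycentric subdivision of $\mathrm{Diag}(P)$: every $N$-free poset $Q$ obtained from a barycentric subdivision of $\mathrm{Diag}(P)$ contains $S_N(S_N(P))$, in the sense that every edge of $\mathrm{Diag}(P)$ on which a vertex is added in $S_N(S_N(P))$ also receives at least one added vertex in $Q$.
   Context: For a poset $P$, a covering pair is a pair $(x,y)$ with $x<y$ and no $z$ with $x<z<y$; we write $x\prec y$. $\mathrm{Diag}(P)$ is the directed graph on $P$ whose edges are the covering pairs. $\mathrm{Inc}(P)$ is the set of pairs of incomparable elements. Four elements $a,b,c,d$ of $P$ form an $N$ in $P$ if $b\prec c$, $a\prec c$, $b\prec d$ and $(a,d)\in\mathrm{Inc}(P)$; the pair $(b,c)$ is then the diagonal edge of this $N$. $P$ is $N$-free if it contains no $N$. $N_{diag}(P)$ denotes the set of diagonal edges of all $N$'s in $P$. A barycentric subdivision of $\mathrm{Diag}(P)$ consists of adding finitely many (possibly zero) new vertices on each edge of $\mathrm{Diag}(P)$ (a new vertex $u$ on edge $(x,y)$ subdivides it into $x\prec u\prec y$, several added vertices forming a chain); the resulting vertex set with the induced order (transitive closure) is a poset containing $P$ as a subposet. $S_N(P)$ is the poset obtained from $P$ by adding one new (dummy) vertex on each edge of $N_{diag}(P)$. *)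

(* Defs.v *)
From HB Require Import structures.
From mathcomp Require Import all_boot all_order.

Unset Printing Implicit Defensive.

(* A finite poset is given by a finite type T and its (reflexive) order
   relation [le : rel T].  All notions below are stated for an arbitrary
   such relation, so that they can be applied to P and to the posets
   obtained from P by subdivision. *)

Section Notions.
Variables (T : finType) (le : rel T).

Definition ltb (x y : T) : bool := (x != y) && le x y.

Definition coverb (x y : T) : bool :=
  ltb x y && [forall z, ~~ (ltb x z && ltb z y)].

Definition incomp (x y : T) : bool := ~~ le x y && ~~ le y x.

Definition isN (a b c d : T) : bool :=
  [&& coverb b c, coverb a c, coverb b d & incomp a d].

Definition Ndiag (b c : T) : bool := [exists a, exists d, isN a b c d].

Definition Nfree : Prop := forall a b c d, ~~ isN a b c d.

(* [k x y] new vertices are put on each covering edge (x, y); values of k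
   on non-covering pairs are irrelevant. *)
Definition subk (k : T -> T -> nat) (x y : T) : nat :=
  if coverb x y then k x y else 0.

(* vertex set: old vertices (inl) and, for each covering edge e,
   new vertices (inr (e, i)) with i < k e, forming the chain
   e.1 < (e,0) < (e,1) < ... < (e, k e - 1) < e.2 *)
Definition subV (k : T -> T -> nat) : finType :=
  (T + {e : T * T & 'I_(subk k e.1 e.2)})%type.

Definition substep (k : T -> T -> nat) (u v : subV k) : bool :=
  match u, v with
  | inl x, inl y => coverb x y && (subk k x y == 0)
  | inl x, inr q => ((tag q).1 == x) && (val (tagged q) == 0)
  | inr p, inr q => (tag p == tag q) && (val (tagged q) == (val (tagged p)).+1)
  | inr p, inl y => ((tag p).2 == y) && ((val (tagged p)).+1 == subk k (tag p).1 (tag p).2)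
  end.

Definition suble (k : T -> T -> nat) : rel (subV k) := connect (substep k).

Definition SNk (x y : T) : nat := if Ndiag x y then 1 else 0.
Definition SNV : finType := subV SNk.
Definition SNle : rel SNV := suble SNk.

End Notions.

Arguments ltb {T} le x y.
Arguments coverb {T} le x y.
Arguments incomp {T} le x y.
Arguments isN {T} le a b c d.
Arguments Ndiag {T} le b c.
Arguments Nfree {T} le.
Arguments subk {T} le k x y.
Arguments subV {T} le k.
Arguments substep {T} le k u v.
Arguments suble {T} le k u v.
Arguments SNk {T} le x y.
Arguments SNV {T} le.
Arguments SNle {T} le u v.

Definition SN2V {T : finType} (le : rel T) : finType := SNV (SNle le).
Definition SN2le {T : finType} (le : rel T) : rel (SN2V le) := SNle (SNle le).
Definition SN2emb {T : finType} (le : rel T) (x : T) : SN2V le := inl (inl x).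

Definition SN2_added {T : finType} (le : rel T) (x y : T) : Prop :=
  exists z : SN2V le,
    (forall w, z != SN2emb le w) /\
    ltb (@SN2le T le) (SN2emb le x) z /\ ltb (@SN2le T le) z (SN2emb le y).

(* Main.v *)
Require Import Defs.
From HB Require Import structures.
From mathcomp Require Import all_boot all_order.
From mathcomp Require Import zify.
Set Implicit Arguments.
Unset Strict Implicit.

Lemma nat_aux1 a b : a <= b -> b = 0 -> a = b. Proof. lia. Qed.
Lemma nat_aux2 a b c : a <= b -> b < c -> a.+1 = c -> b = a. Proof. lia. Qed.
Lemma nat_aux3 a b c : a <= b -> b <= c -> c = a.+1 -> b != a -> b = c. Proof. move=> h1 h2 h3 /eqP h4; lia. Qed.

Section Basic.
Variables (T : finType) (le : rel T).

Definition Wc (b c : T) : Prop :=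
  (exists a, a != b /\ coverb le a c) /\ (exists d, d != c /\ coverb le b d).

Lemma isN_neq a b c d : isN le a b c d -> a != b /\ d != c.
Proof.
case/and4P => hbc hac hbd /andP [n1 n2]; split; apply/negP => /eqP E; subst.
  by move: n1; case/andP: hbd => /andP [_ ->].
by move: n1; case/andP: hac => /andP [_ ->].
Qed.
End Basic.

Section Gen.
Variables (T : finType) (le : rel T).
Hypothesis leR : reflexive le.
Hypothesis leA : antisymmetric le.
Hypothesis leT : transitive le.

Local Notation lt := (ltb le).
Local Notation cov := (coverb le).

Lemma anti x y : le x y -> le y x -> x = y.
Proof. by move=> h1 h2; apply: leA; rewrite h1 h2. Qed.
Lemma tr x y z : le x y -> le y z -> le x z.
Proof. exact: leT. Qed.

Lemma ltW x y : lt x y -> le x y. Proof. by case/andP. Qed.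
Lemma lt_nge x y : lt x y -> ~~ le y x.
Proof.
move=> /andP [ne lxy]; apply/negP => lyx.
by move: ne; rewrite (anti lxy lyx) eqxx.
Qed.
Lemma lt_le_trans x y z : lt x y -> le y z -> lt x z.
Proof.
move=> hxy lyz; rewrite /ltb (tr (ltW hxy) lyz) andbT.
apply/negP => /eqP exz; subst z.
by move: (lt_nge hxy); rewrite lyz.
Qed.
Lemma le_lt_trans x y z : le x y -> lt y z -> lt x z.
Proof.
move=> lxy hyz; rewrite /ltb (tr lxy (ltW hyz)) andbT.
apply/negP => /eqP exz; subst z.
by move: (lt_nge hyz); rewrite lxy.
Qed.
Lemma lt_trans' x y z : lt x y -> lt y z -> lt x z.
Proof. by move=> h1 h2; exact: lt_le_trans h1 (ltW h2). Qed.
Lemma lt_irr x : lt x x = false. Proof. by rewrite /ltb eqxx. Qed.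
Lemma covW x y : cov x y -> lt x y. Proof. by case/andP. Qed.
Lemma cov_nomid x y z : cov x y -> lt x z -> lt z y -> False.
Proof. by move=> /andP [_ /forallP H] h1 h2; move: (H z); rewrite h1 h2. Qed.

Lemma ex_cover_up_n n : forall x y,
  #|[pred w | lt x w && le w y]| <= n -> lt x y -> exists v, cov x v /\ le v y.
Proof.
elim: n => [|n IH] x y Hn lxy.
  have H : 0 < #|[pred w | lt x w && le w y]|.
    by apply/card_gt0P; exists y; rewrite inE /= lxy leR.
  by rewrite leqNgt H in Hn.
case: (boolP (cov x y)) => Hc; first by exists y; split => //; apply: leR.
have [z /andP [lxz lzy]] : exists z, lt x z && lt z y.
  by move: Hc; rewrite /coverb lxy /= => /forallPn [z]; rewrite negbK => Hz; exists z.
have Hp : [pred w | lt x w && le w z] \proper [pred w | lt x w && le w y].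
  apply/properP; split.
    apply/subsetP => w; rewrite !inE /= => /andP [-> lwz] /=.
    exact: tr lwz (ltW lzy).
  exists y; first by rewrite inE /= lxy leR.
  by rewrite inE /= negb_and (lt_nge lzy) orbT.
have [v [cv lvz]] := IH x z (leq_trans (proper_card Hp) Hn) lxz.
by exists v; split => //; exact: tr lvz (ltW lzy).
Qed.

Lemma ex_cover_up x y : lt x y -> exists v, cov x v /\ le v y.
Proof. exact: ex_cover_up_n (leqnn _). Qed.

Lemma ex_cover_down_n n : forall x y,
  #|[pred w | le x w && lt w y]| <= n -> lt x y -> exists v, le x v /\ cov v y.
Proof.
elim: n => [|n IH] x y Hn lxy.
  have H : 0 < #|[pred w | le x w && lt w y]|.
    by apply/card_gt0P; exists x; rewrite inE /= lxy leR.
  by rewrite leqNgt H in Hn.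
case: (boolP (cov x y)) => Hc; first by exists x; split => //; apply: leR.
have [z /andP [lxz lzy]] : exists z, lt x z && lt z y.
  by move: Hc; rewrite /coverb lxy /= => /forallPn [z]; rewrite negbK => Hz; exists z.
have Hp : [pred w | le z w && lt w y] \proper [pred w | le x w && lt w y].
  apply/properP; split.
    apply/subsetP => w; rewrite !inE /= => /andP [lzw ->]; rewrite andbT.
    exact: tr (ltW lxz) lzw.
  exists x; first by rewrite inE /= lxy leR.
  by rewrite inE /= negb_and (lt_nge lxz).
have [v [lzv cv]] := IH z y (leq_trans (proper_card Hp) Hn) lzy.
by exists v; split => //; exact: tr (ltW lxz) lzv.
Qed.

Lemma ex_cover_down x y : lt x y -> exists v, le x v /\ cov v y.
Proof. exact: ex_cover_down_n (leqnn _). Qed.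

Lemma T1 b c d : cov b c -> cov b d -> c != d -> ~~ le c d.
Proof.
move=> hbc hbd ncd; apply/negP => lcd.
by apply: (cov_nomid hbd (covW hbc)); rewrite /ltb lcd ncd.
Qed.
Lemma T2 a b c : cov a c -> cov b c -> a != b -> ~~ le a b.
Proof.
move=> hac hbc nab; apply/negP => lab.
by apply: (cov_nomid hac _ (covW hbc)); rewrite /ltb lab nab.
Qed.
Lemma T3 a b c d : cov b c -> cov a c -> cov b d -> ~~ le d a.
Proof.
move=> hbc hac hbd; apply/negP => lda.
exact: (cov_nomid hbc (lt_le_trans (covW hbd) lda) (covW hac)).
Qed.

Lemma Ndiag_W b c : Ndiag le b c -> Wc le b c.
Proof.
case/existsP => a /existsP [d H]; have [n1 n2] := isN_neq H.
by case/and4P: H => hbc hac hbd _; split; [exists a | exists d].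
Qed.

Lemma notN a b c d : ~~ isN le a b c d -> cov b c -> cov a c -> cov b d -> le a d || le d a.
Proof. by move=> H h1 h2 h3; move: H; rewrite /isN h1 h2 h3 /incomp /= negb_and !negbK. Qed.

Lemma Key1 a b c d : cov b c -> cov a c -> a != b -> cov a d ->
  Ndiag le a d -> ~~ Ndiag le a c -> (forall d', cov b d' -> ~~ Ndiag le b d') -> False.
Proof.
move=> hbc hac nab had Nad nNac nNb.
have claim : forall u, cov a u -> cov b u.
  move=> u hau.
  have H1 : le b u || le u b.
    apply: (notN _ hac hbc hau).
    by apply/negP => HN; move/negP: nNac; apply; apply/existsP; exists b; apply/existsP; exists u.
  have lbu : le b u.
    case/orP: H1 => // lub; exfalso.
    exact: (cov_nomid hac (covW hau) (le_lt_trans lub (covW hbc))).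
  have nbu : b != u.
    apply/negP => /eqP E; subst u.
    exact: (cov_nomid hac (covW hau) (covW hbc)).
  have ltbu : lt b u by rewrite /ltb nbu lbu.
  rewrite /coverb ltbu /=; apply/forallP => z; apply/negP => /andP [lbz lzu].
  have [v [cbv lvz]] := ex_cover_up lbz.
  have H2 : le a v || le v a.
    apply: (notN _ hbc hac cbv).
    by apply/negP => HN; move/negP: (nNb c hbc); apply; apply/existsP; exists a; apply/existsP; exists v.
  case/orP: H2 => [lav | lva].
    have nav : a != v.
      apply/negP => /eqP E; subst v.
      exact: (cov_nomid hbc (covW cbv) (covW hac)).
    have ltav : lt a v by rewrite /ltb nav lav.
    exact: (cov_nomid hau (lt_le_trans ltav lvz) lzu).
  exact: (cov_nomid hbc (covW cbv) (le_lt_trans lva (covW hac))).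
case/existsP: Nad => x /existsP [y H].
case/and4P: H => _ hxd hay ixy.
move/negP: (nNb d (claim d had)); apply.
apply/existsP; exists x; apply/existsP; exists y.
by rewrite /isN (claim d had) hxd (claim y hay) ixy.
Qed.

Lemma Key2 a b c d : cov b c -> cov b d -> d != c -> cov a d ->
  Ndiag le a d -> ~~ Ndiag le b d -> (forall a', cov a' c -> ~~ Ndiag le a' c) -> False.
Proof.
move=> hbc hbd ndc had Nad nNbd nNc.
have claim : forall l, cov l d -> cov l c.
  move=> l hld.
  have H1 : le l c || le c l.
    apply: (notN _ hbd hld hbc).
    by apply/negP => HN; move/negP: nNbd; apply; apply/existsP; exists l; apply/existsP; exists c.
  have llc : le l c.
    case/orP: H1 => // lcl; exfalso.
    exact: (cov_nomid hbd (covW hbc) (le_lt_trans lcl (covW hld))).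
  have nlc : l != c.
    apply/negP => /eqP E; subst l.
    exact: (cov_nomid hbd (covW hbc) (covW hld)).
  have ltlc : lt l c by rewrite /ltb nlc llc.
  rewrite /coverb ltlc /=; apply/forallP => z; apply/negP => /andP [llz lzc].
  have [v [lzv cvc]] := ex_cover_down lzc.
  have H2 : le v d || le d v.
    apply: (notN _ hbc cvc hbd).
    by apply/negP => HN; move/negP: (nNc b hbc); apply; apply/existsP; exists v; apply/existsP; exists d.
  case/orP: H2 => [lvd | ldv].
    have nvd : v != d.
      apply/negP => /eqP E; subst v.
      exact: (cov_nomid hbc (covW hbd) (covW cvc)).
    have ltvd : lt v d by rewrite /ltb nvd lvd.
    exact: (cov_nomid hld llz (le_lt_trans lzv ltvd)).
  exact: (cov_nomid hbc (lt_le_trans (covW hbd) ldv) (covW cvc)).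
case/existsP: Nad => x /existsP [y H].
case/and4P: H => _ hxd hay ixy.
move/negP: (nNc a (claim a had)); apply.
apply/existsP; exists x; apply/existsP; exists y.
by rewrite /isN (claim a had) (claim x hxd) hay ixy.
Qed.


Variable k : T -> T -> nat.
Local Notation V := (subV le k).
Local Notation E := {e : T * T & 'I_(subk le k e.1 e.2)}.
Local Notation st := (substep le k).
Local Notation sle := (suble le k).

Definition lo (u : V) : T := match u with inl x => x | inr p => (tag p).1 end.
Definition hi (u : V) : T := match u with inl x => x | inr p => (tag p).2 end.
Definition sameE (u v : V) : bool :=
  match u, v with
  | inr p, inr q => (tag p == tag q) && (val (tagged p) <= val (tagged q))
  | _, _ => false
  end.
Definition R (u v : V) : bool := le (hi u) (lo v) || sameE u v.

Lemma tag_cov (p : E) : cov (tag p).1 (tag p).2 /\ 0 < subk le k (tag p).1 (tag p).2.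
Proof.
case: p => [[x y] i] /=.
have Hpos : 0 < subk le k x y by exact: leq_ltn_trans (leq0n _) (ltn_ord i).
split => //; move: Hpos; clear i; rewrite /subk; by case: ifP.
Qed.

Lemma tag_nle (p : E) : ~~ le (tag p).2 (tag p).1.
Proof. by have [/covW/lt_nge h _] := tag_cov p. Qed.
Lemma tag_le (p : E) : le (tag p).1 (tag p).2.
Proof. by have [/covW/ltW h _] := tag_cov p. Qed.

Lemma E_eq (p q : E) : tag p = tag q -> val (tagged p) = val (tagged q) -> p = q.
Proof. by case: p => e i; case: q => f j /= Hef; subst f => Hij; rewrite (ord_inj Hij). Qed.

Lemma st_irr u : st u u = false.
Proof.
case: u => [x|[e i]] /=; first by rewrite /coverb lt_irr.
by rewrite eqxx /= eqn_leq ltnn andbF.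
Qed.

Lemma R_refl u : R u u.
Proof. by case: u => [x|p]; rewrite /R /= ?leR ?eqxx ?leqnn ?orbT. Qed.

Lemma ord_cov x y (i : 'I_(subk le k x y)) : cov x y /\ 0 < subk le k x y.
Proof. exact: (tag_cov (existT (fun e : T * T => 'I_(subk le k e.1 e.2)) (x, y) i)). Qed.
Lemma ord_le x y (i : 'I_(subk le k x y)) : le x y.
Proof. by have [/covW/ltW] := ord_cov i. Qed.
Lemma ord_nle x y (i : 'I_(subk le k x y)) : ~~ le y x.
Proof. by have [/covW/lt_nge] := ord_cov i. Qed.

Lemma R_step u v w : R u v -> st v w -> R u w.
Proof.
rewrite /R.
case: u => [a|[[r1 r2] r]]; case: v => [x|[[p1 p2] p]]; case: w => [y|[[q1 q2] q]] /=.
- by rewrite !orbF => lax /andP [/covW/ltW lxy _]; exact: tr lax lxy.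
- by rewrite !orbF => lax /andP [/eqP E _]; subst x.
- by rewrite !orbF => lap /andP [/eqP E _]; subst y; exact: tr lap (ord_le p).
- by rewrite !orbF => lap /andP [/eqP [E1 E2] _]; subst q1 q2.
- by rewrite !orbF => lrx /andP [/covW/ltW lxy _]; exact: tr lrx lxy.
- by rewrite orbF => lrx /andP [/eqP E _]; subst x; rewrite lrx.
- rewrite orbF => H /andP [/eqP E _]; subst y.
  case/orP: H => [lrp | /andP [/eqP [E1 E2] _]]; last by subst r1 r2; exact: leR.
  exact: tr lrp (ord_le p).
- move=> H /andP [/eqP [E1 E2] /eqP Eq]; subst q1 q2.
  case/orP: H => [-> // | /andP [Hrp lrp]].
  by rewrite Hrp Eq (leq_trans lrp (leqnSn _)) orbT.
Qed.

Lemma R_sub u v : sle u v -> R u v.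
Proof.
case/connectP => p Hp ->.
have H : forall p x, R u x -> path st x p -> R u (last x p).
  elim=> [|w q IH] x Hux //= /andP [Hxw Hq].
  exact: IH _ (R_step Hux Hxw) Hq.
exact: H p u (R_refl u) Hp.
Qed.

Lemma R_anti u v : R u v -> R v u -> u = v.
Proof.
rewrite /R.
case: u => [x|[[p1 p2] p]]; case: v => [y|[[q1 q2] q]] /=; rewrite ?orbF.
- by move=> h1 h2; rewrite (anti h1 h2).
- move=> h1 h2; exfalso; move/negP: (ord_nle q); apply.
  exact: tr h2 h1.
- move=> h1 h2; exfalso; move/negP: (ord_nle p); apply.
  exact: tr h1 h2.
- move=> /orP [h1 | /andP [/eqP [E1 E2] l1]] /orP [h2 | /andP [/eqP [E3 E4] l2]].
  + exfalso; move/negP: (ord_nle p); apply.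
    exact: tr h1 (tr (ord_le q) h2).
  + subst q1 q2; exfalso; move/negP: (ord_nle p); apply; exact: h1.
  + subst q1 q2; exfalso; move/negP: (ord_nle p); apply; exact: h2.
  + subst q1 q2; congr inr.
    have Eq : nat_of_ord p = nat_of_ord q by apply/eqP; rewrite eqn_leq l1 l2.
    by rewrite (ord_inj Eq).
Qed.

Lemma sle_anti : antisymmetric sle.
Proof. by move=> u v /andP [h1 h2]; exact: R_anti (R_sub h1) (R_sub h2). Qed.
Lemma sle_refl : reflexive sle.
Proof. move=> u; exact: connect0. Qed.
Lemma sle_trans : transitive sle.
Proof. move=> y x z; exact: connect_trans. Qed.

Lemma pred_lt n : 0 < n -> n.-1 < n. Proof. by case: n. Qed.

Definition mkE x y (i : 'I_(subk le k x y)) : E :=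
  existT (fun e : T * T => 'I_(subk le k e.1 e.2)) (x, y) i.

Lemma cov_path x y : cov x y -> sle (inl x) (inl y).
Proof.
move=> Hc; case: (posnP (subk le k x y)) => Hk.
  by apply: connect1; rewrite /= Hc Hk.
have Hi : forall i (Hi : i < subk le k x y), sle (inl x) (inr (mkE (Ordinal Hi))).
  elim=> [|i IH] Hi.
    by apply: connect1; rewrite /= eqxx.
  apply: connect_trans (IH (ltnW Hi)) (connect1 _).
  by rewrite /= !eqxx.
apply: connect_trans (Hi _ (pred_lt Hk)) (connect1 _).
by rewrite /= eqxx prednK ?eqxx.
Qed.

Lemma le_sle_n n : forall x y, #|[pred w | lt x w && le w y]| <= n -> le x y -> sle (inl x) (inl y).
Proof.
elim: n => [|n IH] x y Hn lxy.
  case: (eqVneq x y) => [-> | nxy]; first exact: connect0.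
  have H : 0 < #|[pred w | lt x w && le w y]|.
    by apply/card_gt0P; exists y; rewrite inE /= /ltb nxy lxy leR.
  by rewrite leqNgt H in Hn.
case: (eqVneq x y) => [-> | nxy]; first exact: connect0.
have ltxy : lt x y by rewrite /ltb nxy lxy.
have [v [cv lvy]] := ex_cover_up ltxy.
have Hp : [pred w | lt v w && le w y] \proper [pred w | lt x w && le w y].
  apply/properP; split.
    apply/subsetP => w; rewrite !inE /= => /andP [lvw ->]; rewrite andbT.
    exact: lt_trans' (covW cv) lvw.
  exists v; first by rewrite inE /= (covW cv) lvy.
  by rewrite inE /= lt_irr.
apply: connect_trans (cov_path cv) _.
exact: IH v y (leq_trans (proper_card Hp) Hn) lvy.
Qed.

Lemma sle_old x y : sle (inl x) (inl y) = le x y.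
Proof.
apply/idP/idP => [/R_sub | H]; first by rewrite /R /= orbF.
exact: le_sle_n (leqnn _) H.
Qed.

Lemma covQ u v : coverb sle u v = st u v.
Proof.
apply/idP/idP.
  move=> /andP [/andP [nuv suv] /forallP Hno].
  case/connectP: suv => [[|w p]] /= Hp Elast.
    by rewrite Elast eqxx in nuv.
  case/andP: Hp => Huw Hp'.
  case: (eqVneq w v) => [<- // | nwv]; exfalso.
  have nuw : u != w by apply/eqP => E; subst; rewrite st_irr in Huw.
  have swv : sle w v by apply/connectP; exists p.
  have suw : sle u w := connect1 Huw.
  by move: (Hno w); rewrite /ltb nuw nwv suw swv.
move=> Hs; have suv : sle u v := connect1 Hs.
rewrite /coverb /ltb suv andbT.
have -> : u != v by apply/eqP => E; subst; rewrite st_irr in Hs.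
apply/forallP => z; apply/negP => /andP [/andP [nuz suz] /andP [nzv szv]].
move: (R_sub suz) (R_sub szv) nuz nzv Hs; clear suz szv suv; rewrite /R.
case: u => [x|[[p1 p2] p]]; case: v => [y|[[q1 q2] q]]; case: z => [w|[[r1 r2] r]] /=.
- rewrite !orbF => h1 h2 n1 n2 /andP [hc _].
  apply: (cov_nomid hc (z := w)).
    by rewrite /ltb h1 andbT; apply/eqP => E; subst; rewrite eqxx in n1.
  by rewrite /ltb h2 andbT; apply/eqP => E; subst; rewrite eqxx in n2.
- rewrite !orbF => h1 h2 _ _ /andP [hc /eqP hk].
  have [hr hpos] := ord_cov r.
  have E1 : r1 = x.
    case: (eqVneq r1 x) => // nx; exfalso; apply: (cov_nomid hc (z := r1)).
      by rewrite /ltb h1 andbT eq_sym.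
    exact: lt_le_trans (covW hr) h2.
  subst r1.
  have E2 : r2 = y.
    case: (eqVneq r2 y) => // ny; exfalso; apply: (cov_nomid hc (z := r2)).
      exact: covW hr.
    by rewrite /ltb h2 ny.
  subst r2; by rewrite hk in hpos.
- rewrite !orbF => h1 h2 n1 _ /andP [/eqP E _]; subst q1.
  have Ew := anti h1 h2; subst w; by rewrite eqxx in n1.
- rewrite orbF => h1 h2 _ n2 /andP [/eqP E /eqP Eq]; subst q1.
  case/orP: h2 => [h2 | /andP [/eqP [E1 E2] lrq]].
    by move/negP: (ord_nle r); apply; exact: tr h2 h1.
  subst r1 r2.
  have Erq : r = q by apply: ord_inj; exact: nat_aux1 lrq Eq.
  by subst r; rewrite eqxx in n2.
- rewrite !orbF => h1 h2 _ n2 /andP [/eqP E _]; subst y.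
  have Ew := anti h2 h1; subst w; by rewrite eqxx in n2.
- rewrite orbF => h1 h2 n1 _ /andP [/eqP E /eqP Eq]; subst y.
  case/orP: h1 => [h1 | /andP [/eqP [E1 E2] lpr]].
    by move/negP: (ord_nle r); apply; exact: tr h2 h1.
  subst r1 r2.
  have Erp : r = p by apply: ord_inj; exact: nat_aux2 lpr (ltn_ord r) Eq.
  by subst r; rewrite eqxx in n1.
- rewrite !orbF => h1 h2 _ _ /andP [/eqP [E1 E2] _]; subst q1 q2.
  by move/negP: (ord_nle p); apply; exact: tr h1 h2.
- move=> h1 h2 n1 n2 /andP [/eqP [E1 E2] /eqP Eq]; subst q1 q2.
  case/orP: h1 => [h1 | /andP [/eqP [E1 E2] lpr]];
  case/orP: h2 => [h2 | /andP [/eqP [E3 E4] lrq]].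
  + move/negP: (ord_nle p); apply.
    exact: tr h1 (tr (ord_le r) h2).
  + by subst r1 r2; move/negP: (ord_nle p); apply.
  + by subst r1 r2; move/negP: (ord_nle p); apply.
  + subst r1 r2.
    case: (eqVneq (nat_of_ord r) (nat_of_ord p)) => [Erp | nrp].
      by move/ord_inj: Erp => Erp; subst r; rewrite eqxx in n1.
    have Erq : r = q by apply: ord_inj; exact: nat_aux3 lpr lrq Eq nrp.
    by subst r; rewrite eqxx in n2.
Qed.

Lemma pred_uniq a b q : st a (inr q) -> st b (inr q) -> a = b.
Proof.
case: q => [[q1 q2] q].
case: a => [x|[[p1 p2] p]]; case: b => [y|[[r1 r2] r]] /=.
- by move=> /andP [/eqP E1 _] /andP [/eqP E2 _]; subst.
- by move=> /andP [_ /eqP h1] /andP [_ /eqP h2]; rewrite h1 in h2.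
- by move=> /andP [_ /eqP h1] /andP [_ /eqP h2]; rewrite h2 in h1.
- move=> /andP [/eqP [E1 E2] /eqP h1] /andP [/eqP [E3 E4] /eqP h2]; subst p1 p2 r1 r2.
  have Epr : p = r by apply: ord_inj; rewrite h1 in h2; case: h2.
  by subst.
Qed.

Lemma succ_uniq p c d : st (inr p) c -> st (inr p) d -> c = d.
Proof.
case: p => [[p1 p2] p].
case: c => [x|[[q1 q2] q]]; case: d => [y|[[r1 r2] r]] /=.
- by move=> /andP [/eqP E1 _] /andP [/eqP E2 _]; subst.
- move=> /andP [_ /eqP h1] /andP [/eqP [E1 E2] /eqP h2]; subst r1 r2.
  by have := ltn_ord r; rewrite h2 h1 ltnn.
- move=> /andP [/eqP [E1 E2] /eqP h2] /andP [_ /eqP h1]; subst q1 q2.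
  by have := ltn_ord q; rewrite h2 h1 ltnn.
- move=> /andP [/eqP [E1 E2] /eqP h1] /andP [/eqP [E3 E4] /eqP h2]; subst q1 q2 r1 r2.
  have Eqr : q = r by apply: ord_inj; rewrite h1 h2.
  by subst.
Qed.

Lemma pred_info a b0 c0 : st a (inl c0) -> a != inl b0 -> subk le k b0 c0 = 0 ->
  exists a0, [/\ a0 != b0, cov a0 c0 & (a = inl a0 /\ subk le k a0 c0 = 0) \/ 0 < subk le k a0 c0].
Proof.
case: a => [x|[[p1 p2] p]] /=.
  by move=> /andP [hc /eqP hk] n _; exists x; split => //; left.
move=> /andP [/eqP E _] _ hk; subst c0.
have [hc hpos] := ord_cov p.
exists p1; split => //; last by right.
by apply/eqP => E; subst; rewrite hk in hpos.
Qed.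

Lemma succ_info d b0 c0 : st (inl b0) d -> d != inl c0 -> subk le k b0 c0 = 0 ->
  exists d0, [/\ d0 != c0, cov b0 d0 & (d = inl d0 /\ subk le k b0 d0 = 0) \/ 0 < subk le k b0 d0].
Proof.
case: d => [y|[[q1 q2] q]] /=.
  by move=> /andP [hc /eqP hk] n _; exists y; split => //; left.
move=> /andP [/eqP E _] _ hk; subst b0.
have [hc hpos] := ord_cov q.
exists q2; split => //; last by right.
by apply/eqP => E; subst; rewrite hk in hpos.
Qed.

Lemma old_cover u v : coverb sle u v -> Wc sle u v ->
  exists b0 c0, [/\ u = inl b0, v = inl c0, cov b0 c0, subk le k b0 c0 = 0 & Wc le b0 c0].
Proof.
rewrite covQ => Huv [[a [na Ha]] [d [nd Hd]]]; rewrite covQ in Ha; rewrite covQ in Hd.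
case: u Huv na Hd => [b0|p] Huv na Hd; last first.
  by have E := succ_uniq Huv Hd; rewrite E eqxx in nd.
case: v Huv nd Ha => [c0|q] Huv nd Ha; last first.
  by have E := pred_uniq Ha Huv; rewrite E eqxx in na.
move: (Huv) => /= /andP [hc /eqP hk].
exists b0, c0; split => //; split.
  by have [a0 [n0 c0' _]] := pred_info Ha na hk; exists a0.
by have [d0 [n0 c0' _]] := succ_info Hd nd hk; exists d0.
Qed.

Definition Dis b0 c0 : Prop :=
  Ndiag le b0 c0 \/ (exists a0, [/\ a0 != b0, cov a0 c0 & 0 < subk le k a0 c0]) \/
  (exists d0, [/\ d0 != c0, cov b0 d0 & 0 < subk le k b0 d0]).

Lemma NQ a b c d : isN sle a b c d ->
  exists b0 c0, [/\ b = inl b0, c = inl c0, cov b0 c0, subk le k b0 c0 = 0 & Wc le b0 c0 /\ Dis b0 c0].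
Proof.
move=> H; have [nab ndc] := isN_neq H.
case/and4P: H => hbc hac hbd hinc.
have Wbc : Wc sle b c by split; [exists a | exists d].
have [b0 [c0 [Eb Ec hc hk W0]]] := old_cover hbc Wbc; subst b c.
exists b0, c0; split => //; split => //.
rewrite covQ in hac; rewrite covQ in hbd.
have [a0 [na0 ca0 Ha]] := pred_info hac nab hk.
have [d0 [nd0 cd0 Hd]] := succ_info hbd ndc hk.
case: Ha => [[Ea ka] | ka]; last by right; left; exists a0.
case: Hd => [[Ed kd] | kd]; last by right; right; exists d0.
subst a d; left; apply/existsP; exists a0; apply/existsP; exists d0.
by rewrite /isN hc ca0 cd0 /=; move: hinc; rewrite /incomp !sle_old.
Qed.

Definition topv a0 c0 (H : 0 < subk le k a0 c0) : V := inr (mkE (Ordinal (pred_lt H))).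
Definition botv b0 d0 (H : 0 < subk le k b0 d0) : V := inr (mkE (Ordinal H)).
Lemma st_top a0 c0 (H : 0 < subk le k a0 c0) : st (topv H) (inl c0).
Proof. by rewrite /= eqxx (prednK H) eqxx. Qed.
Lemma st_bot b0 d0 (H : 0 < subk le k b0 d0) : st (inl b0) (botv H).
Proof. by rewrite /= !eqxx. Qed.

Lemma CQ b0 c0 : cov b0 c0 -> subk le k b0 c0 = 0 -> Wc le b0 c0 -> Dis b0 c0 ->
  Ndiag sle (inl b0) (inl c0).
Proof.
move=> hc hk [[aW [naW caW]] [dW [ndW cdW]]] HD.
have sbc : st (inl b0) (inl c0) by rewrite /= hc hk eqxx.
have caseB : forall a0 d0, a0 != b0 -> cov a0 c0 -> 0 < subk le k a0 c0 ->
    d0 != c0 -> cov b0 d0 -> Ndiag sle (inl b0) (inl c0).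
  move=> a0 d0 nab hac ka ndc hbd.
  apply/existsP; exists (topv ka); apply/existsP.
  case: (posnP (subk le k b0 d0)) => kd.
    exists (inl d0); rewrite /isN !covQ st_top sbc /= hbd kd eqxx /=.
    rewrite /incomp; apply/andP; split; apply/negP => /R_sub; rewrite /R /= ?orbF.
      by apply/negP; apply: T1 hc hbd _; rewrite eq_sym.
    by apply/negP; apply: T3 hc hac hbd.
  exists (botv kd); rewrite /isN !covQ st_top st_bot sbc /=.
  rewrite /incomp; apply/andP; split; apply/negP => /R_sub; rewrite /R /= xpair_eqE.
    by rewrite (negbTE nab) /= orbF; apply/negP; apply: lt_nge (covW hc).
  by rewrite eq_sym (negbTE nab) /= orbF; apply/negP; apply: T3 hc hac hbd.
have caseC : forall a0 d0, a0 != b0 -> cov a0 c0 -> subk le k a0 c0 = 0 ->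
    d0 != c0 -> cov b0 d0 -> 0 < subk le k b0 d0 -> Ndiag sle (inl b0) (inl c0).
  move=> a0 d0 nab hac ka ndc hbd kd.
  apply/existsP; exists (inl a0); apply/existsP; exists (botv kd).
  rewrite /isN !covQ st_bot sbc /= hac ka eqxx /=.
  rewrite /incomp; apply/andP; split; apply/negP => /R_sub; rewrite /R /= ?orbF.
    by apply/negP; apply: T2 hac hc nab.
  by apply/negP; apply: T3 hc hac hbd.
case: HD => [hN | [[a0 [na0 ca0 ka0]] | [d0 [nd0 cd0 kd0]]]].
- case/existsP: (hN) => a0 /existsP [d0 H].
  have [nab ndc] := isN_neq H.
  case/and4P: (H) => _ hac hbd hinc.
  case: (posnP (subk le k a0 c0)) => ka; last exact: caseB a0 d0 nab hac ka ndc hbd.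
  case: (posnP (subk le k b0 d0)) => kd; last exact: caseC a0 d0 nab hac ka ndc hbd kd.
  apply/existsP; exists (inl a0); apply/existsP; exists (inl d0).
  rewrite /isN !covQ sbc /= hac ka hbd kd eqxx /=.
  by move: hinc; rewrite /incomp !sle_old.
- exact: caseB a0 dW na0 ca0 ka0 ndW cdW.
- case: (posnP (subk le k aW c0)) => ka; last exact: caseB aW d0 naW caW ka nd0 cd0.
  exact: caseC aW d0 naW caW ka nd0 cd0 kd0.
Qed.

Lemma Nfree_pos b0 c0 : Nfree sle -> cov b0 c0 -> Wc le b0 c0 -> Dis b0 c0 -> 0 < subk le k b0 c0.
Proof.
move=> Hf hc W HD; case: (posnP (subk le k b0 c0)) => // hk; exfalso.
case/existsP: (CQ hc hk W HD) => a /existsP [d H].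
by move: (Hf a (inl b0) (inl c0) d); rewrite H.
Qed.

End Gen.

Lemma SN_pos (T : finType) (le : rel T) x y :
  coverb le x y -> (0 < subk le (SNk le) x y) = Ndiag le x y.
Proof. by move=> h; rewrite /subk h /SNk; case: (Ndiag le x y). Qed.

Lemma SN_zero (T : finType) (le : rel T) x y :
  coverb le x y -> subk le (SNk le) x y = 0 -> ~~ Ndiag le x y.
Proof. by move=> h; rewrite /subk h /SNk; case: (Ndiag le x y). Qed.
Lemma SN_zero' (T : finType) (le : rel T) x y :
  coverb le x y -> ~~ Ndiag le x y -> subk le (SNk le) x y = 0.
Proof. by move=> h; rewrite /subk h /SNk; case: (Ndiag le x y). Qed.

Theorem theorem1 (d : Order.disp_t) (T : finPOrderType d) :
  Nfree (SN2le (fun x y : T => (x <= y)%O)) /\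
  (forall k : T -> T -> nat,
     Nfree (suble (fun x y : T => (x <= y)%O) k) ->
     forall x y : T, coverb (fun x y : T => (x <= y)%O) x y ->
       SN2_added (fun x y : T => (x <= y)%O) x y -> 0 < k x y).
Proof.
set lP := (fun x y : T => (x <= y)%O).
have hR : reflexive lP by move=> x; rewrite /lP; exact: Order.POrderTheory.lexx.
have hA : antisymmetric lP by move=> x y; rewrite /lP; exact: Order.POrderTheory.le_anti.
have hT : transitive lP by move=> y x z; rewrite /lP; exact: Order.POrderTheory.le_trans.
have hR1 : reflexive (SNle lP) by exact: sle_refl.
have hA1 : antisymmetric (SNle lP) by exact: sle_anti.
have hT1 : transitive (SNle lP) by exact: sle_trans.
split.
  move=> a b c dd; apply/negP => HN.
  have [b1 [c1 [Eb Ec hc1 hk1 [W1 HD1]]]] := NQ hR1 hA1 hT1 HN; subst b c.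
  have [b0 [c0 [Eb Ec hc0 hk0 W0]]] := old_cover hR hA hT hc1 W1; subst b1 c1.
  have nN1 : ~~ Ndiag (SNle lP) (inl b0) (inl c0) by exact: SN_zero hc1 hk1.
  have nb0c0 : ~~ Ndiag lP b0 c0 by exact: SN_zero hc0 hk0.
  have ndA : forall a', coverb lP a' c0 -> ~~ Ndiag lP a' c0.
    move=> a' ha'; case: (eqVneq a' b0) => [-> // | na'].
    apply/negP => hN; move/negP: nN1; apply; apply: (CQ hR hA hT hc0 hk0 W0).
    by right; left; exists a'; split => //; rewrite (SN_pos ha').
  have ndD : forall d', coverb lP b0 d' -> ~~ Ndiag lP b0 d'.
    move=> d' hd'; case: (eqVneq d' c0) => [-> // | nd'].
    apply/negP => hN; move/negP: nN1; apply; apply: (CQ hR hA hT hc0 hk0 W0).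
    by right; right; exists d'; split => //; rewrite (SN_pos hd').
  case: HD1 => [hN | [[a1 [na1 ca1 ka1]] | [d1 [nd1 cd1 kd1]]]].
  - by rewrite hN in nN1.
  - have hN : Ndiag (SNle lP) a1 (inl c0) by rewrite -(SN_pos ca1).
    case/existsP: hN => x /existsP [y Hxy].
    have [a0 [c0' [Ea Ec hac hka [Wa HDa]]]] := NQ hR hA hT Hxy.
    case: Ec => Ec; subst a1 c0'.
    have na0 : a0 != b0 by apply/eqP => E; subst; rewrite eqxx in na1.
    have nNa : ~~ Ndiag lP a0 c0 by exact: SN_zero hac hka.
    case: HDa => [hN | [[a' [na' ca' ka']] | [d' [nd' cd' kd']]]].
    + by rewrite hN in nNa.
    + by move: (ndA a' ca'); rewrite -(SN_pos ca') ka'.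
    + have hNd : Ndiag lP a0 d' by rewrite -(SN_pos cd').
      exact: (Key1 hR hA hT hc0 hac na0 cd' hNd nNa ndD).
  - have hN : Ndiag (SNle lP) (inl b0) d1 by rewrite -(SN_pos cd1).
    case/existsP: hN => x /existsP [y Hxy].
    have [b0' [d0 [Eb Ed hbd hkd [Wd HDd]]]] := NQ hR hA hT Hxy.
    case: Eb => Eb; subst b0' d1.
    have nd0 : d0 != c0 by apply/eqP => E; subst; rewrite eqxx in nd1.
    have nNbd : ~~ Ndiag lP b0 d0 by exact: SN_zero hbd hkd.
    case: HDd => [hN | [[a' [na' ca' ka']] | [d' [nd' cd' kd']]]].
    + by rewrite hN in nNbd.
    + have hNa : Ndiag lP a' d0 by rewrite -(SN_pos ca').
      exact: (Key2 hR hA hT hc0 hbd nd0 ca' hNa nNbd ndA).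
    + by move: (ndD d' cd'); rewrite -(SN_pos cd') kd'.
move=> k Hf x y hxy [z [_ [hxz hzy]]].
have -> : k x y = subk lP k x y by rewrite /subk hxy.
have pos : forall u v, coverb lP u v -> Ndiag lP u v -> 0 < subk lP k u v.
  move=> u v huv hN; apply: (Nfree_pos hR hA hT Hf huv (Ndiag_W hN)); by left.
case: (boolP (Ndiag lP x y)) => hN1; first exact: pos.
case: (boolP (Ndiag (SNle lP) (inl x) (inl y))) => hN2; last first.
  exfalso.
  have hc1 : coverb (SNle lP) (inl x) (inl y).
    by rewrite (covQ hR hA hT) /= hxy (SN_zero' hxy hN1) eqxx.
  have hst : substep (SNle lP) (SNk (SNle lP)) (inl (inl x)) (inl (inl y)).
    by rewrite /= hc1 (SN_zero' hc1 hN2) eqxx.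
  have hc2 : coverb (SN2le lP) (SN2emb lP x) (SN2emb lP y).
    by rewrite /SN2le /SNle (covQ hR1 hA1 hT1).
  exact: (cov_nomid hc2 hxz hzy).
case/existsP: hN2 => a /existsP [dd H].
have [b0 [c0 [Eb Ec hc hk [W HD]]]] := NQ hR hA hT H.
case: Eb => Eb; case: Ec => Ec; subst b0 c0.
apply: (Nfree_pos hR hA hT Hf hxy W).
case: HD => [hN | [[a0 [na0 ca0 ka0]] | [d0 [nd0 cd0 kd0]]]].
- by rewrite hN in hN1.
- right; left; exists a0; split => //; apply: (pos _ _ ca0); by rewrite -(SN_pos ca0).
- right; right; exists d0; split => //; apply: (pos _ _ cd0); by rewrite -(SN_pos cd0).
Qed.
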